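(* Let $\mathcal{C}_0\subseteq\mathbb{R}^d$ be a cube, $f$ continuous on $\mathcal{C}_0$, $\mathbf{x}$ a sampling rule and $\mathbf{qlb}$ a quasi-lower bound rule for minimizing $f$ over $\mathcal{C}_0$, and $\epsilon>0$. Consider the breadth-first qBnB algorithm described in the context. Then: 1. Every value assigned to $\mathrm{lb}$ by the algorithm satisfies $\mathrm{lb}\le f_*$. 2. If there is a continuous $\psi:\mathbb{R}_{\ge0}\to\mathbb{R}_{\ge0}$ with $\psi(0)=0$ such that $f(\mathbf{x}(\mathcal{C}))-\mathbf{qlb}(\mathcal{C})\le\psi(r)$ for every subcube $\mathcal{C}$ of $\mathcal{C}_0$ of radius $r$, then the algorithm terminates after finitely many steps and its output $x_{\mathrm{best}}$ is $\epsilon$-optimal, i.e. $f(x_{\mathrm{best}})-f_*<\epsilon$.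
   Context: A cube is a set $\{x:|x_i-a_i|\le h_i\}$ with center $a$, radius $\|h\|_2$; $\mathcal{K}$ is the set of subcubes of $\mathcal{C}_0$; $f_*(\mathcal{C})=\min_\mathcal{C}f$, $f_*=\min_{\mathcal{C}_0}f$. A sampling rule is a map $\mathbf{x}:\mathcal{K}\to\mathcal{C}_0$ with $\mathbf{x}(\mathcal{C})\in\mathcal{C}$. A quasi-lower bound rule is a map $\mathbf{qlb}:\mathcal{K}\to[-\infty,\infty]$ with $\mathbf{qlb}(\mathcal{C})\le f_*(\mathcal{C})$ whenever $f_*(\mathcal{C})=f_*$. Algorithm: set $g=0$, $x_{\mathrm{best}}=\mathbf{x}(\mathcal{C}_0)$, $\mathrm{ub}=f(x_{\mathrm{best}})$, $\mathrm{lb}=\mathbf{qlb}(\mathcal{C}_0)$, $L_0=\{(\mathcal{C}_0,\mathbf{qlb}(\mathcal{C}_0))\}$. While $\mathrm{ub}-\mathrm{lb}>\epsilon$: create empty list $L_{g+1}$; for each $(\mathcal{C},q)\in L_g$, if $q\le\mathrm{ub}$ (current value), bisect $\mathcal{C}$ into two equal cubes $\mathcal{C}_1,\mathcal{C}_2$ along a longest edge, and for $i=1,2$ compute $q_i=\mathbf{qlb}(\mathcal{C}_i)$, $x_i=\mathbf{x}(\mathcal{C}_i)$, append $(\mathcal{C}_i,q_i)$ to $L_{g+1}$, and if $f(x_i)<\mathrm{ub}$ set $\mathrm{ub}=f(x_i)$, $x_{\mathrm{best}}=x_i$. After processing $L_g$, set $g\leftarrow g+1$ and $\mathrm{lb}=\min\{q:(\mathcal{C},q)\in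 L_g\}$. On exit output $x_{\mathrm{best}}$. *)

(* Defs.v *)
From HB Require Import structures.
From mathcomp Require Import all_boot all_order all_algebra.
From mathcomp Require Import all_classical all_reals all_analysis.
Set Implicit Arguments. Unset Strict Implicit. Unset Printing Implicit Defensive.
Import Order.TTheory GRing.Theory Num.Theory.
Import numFieldNormedType.Exports.
Local Open Scope classical_set_scope.
Local Open Scope ring_scope.

Section QBnB.
Variables (R : realType) (d : nat).

Record cube := Cube { center : 'rV[R]_d ; hw : 'rV[R]_d }.

Definition valid_cube (C : cube) : Prop := forall i : 'I_d, 0 < hw C ord0 i.

Definition cube_set (C : cube) : set 'rV[R]_d :=
  [set x | forall i : 'I_d, `|x ord0 i - center C ord0 i| <= hw C ord0 i].

Definition cube_radius (C : cube) : R := Num.sqrt (\sum_(i < d) (hw C ord0 i) ^+ 2).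

Definition subcube (C0 C : cube) : Prop :=
  valid_cube C /\ cube_set C `<=` cube_set C0.

(* f_*(C) = min_C f, written as the infimum (attained for continuous f) *)
Definition fmin (f : 'rV[R]_d -> R) (C : cube) : \bar R :=
  ereal_inf [set (f x)%:E | x in cube_set C].

Definition sampling_rule (C0 : cube) (xr : cube -> 'rV[R]_d) : Prop :=
  forall C, subcube C0 C -> cube_set C (xr C).

Definition qlb_rule (f : 'rV[R]_d -> R) (C0 : cube) (qlb : cube -> \bar R) : Prop :=
  forall C, subcube C0 C -> fmin f C = fmin f C0 -> (qlb C <= fmin f C)%E.

Definition longest_edge_sel (sel : cube -> 'I_d) : Prop :=
  forall C (i : 'I_d), hw C ord0 i <= hw C ord0 (sel C).

Definition bisect (sel : cube -> 'I_d) (C : cube) : cube * cube :=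
  let k := sel C in
  let h' := \row_j (if j == k then hw C ord0 j / 2 else hw C ord0 j) in
  (Cube (\row_j (if j == k then center C ord0 j - hw C ord0 j / 2 else center C ord0 j)) h',
   Cube (\row_j (if j == k then center C ord0 j + hw C ord0 j / 2 else center C ord0 j)) h').

Record state := State {
  st_ub : R ; st_xbest : 'rV[R]_d ; st_lb : \bar R ; st_L : seq (cube * \bar R) }.

Section Algo.
Variables (f : 'rV[R]_d -> R) (xr : cube -> 'rV[R]_d) (qlb : cube -> \bar R)
  (sel : cube -> 'I_d) (eps : R) (C0 : cube).

Definition upd (p : R * 'rV[R]_d) (x : 'rV[R]_d) : R * 'rV[R]_d :=
  if f x < p.1 then (f x, x) else p.

(* processing one entry (C,q) of L_g, with accumulator (ub, x_best, L_{g+1}) *)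
Definition proc (acc : (R * 'rV[R]_d) * seq (cube * \bar R)) (e : cube * \bar R) :=
  let: (p, L') := acc in
  let: (C, q) := e in
  if (q <= (p.1)%:E)%E then
    let: (C1, C2) := bisect sel C in
    let p1 := upd p (xr C1) in
    let p2 := upd p1 (xr C2) in
    (p2, L' ++ [:: (C1, qlb C1); (C2, qlb C2)])
  else acc.

Definition init : state :=
  State (f (xr C0)) (xr C0) (qlb C0) [:: (C0, qlb C0)].

(* one pass of the while loop: generation g -> g+1;
   lb := min of the quasi-lower bounds in L_{g+1} (min of empty list = +oo) *)
Definition next (s : state) : state :=
  let: (p, L') := foldl proc ((st_ub s, st_xbest s), [::]) (st_L s) in
  State p.1 p.2 (\big[Order.min/+oo%E]_(e <- L') e.2) L'.

Definition running (s : state) : bool := (eps%:E < (st_ub s)%:E - st_lb s)%E.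

(* the loop; once the condition fails, the state is frozen (= exited) *)
Definition step (s : state) : state := if running s then next s else s.

Definition run (g : nat) : state := iter g step init.

End Algo.
End QBnB.

(* Main.v *)
Require Import Defs.
From HB Require Import structures.
From mathcomp Require Import all_boot all_order all_algebra.
From mathcomp Require Import all_classical all_reals all_analysis.
From mathcomp Require Import lra ring.
Import Order.TTheory GRing.Theory Num.Theory.
Import numFieldNormedType.Exports.
Local Open Scope classical_set_scope.
Local Open Scope ring_scope.
Definition hsum {R : realType} {d : nat} (C : cube R d) : R := \sum_(i < d) hw C ord0 i.

Lemma psi_delta (R : realType) (psi : R -> R) (eps : R) :
  {within `[0, +oo[%classic, continuous psi} -> psi 0 = 0 -> 0 < eps ->
  exists2 del : R, 0 < del & forall r, 0 <= r -> r < del -> psi r < eps.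
Proof.
move=> /subspace_continuousP cp p0 e0.
have A0 : `[0, +oo[%classic (0:R) by rewrite /= in_itv /= lexx.
have := cp 0 A0.
move=> /cvgrPdist_lt /(_ _ e0).
rewrite near_withinE => /nbhs_normP [del del0 H].
exists del => // r r0 rd.
have := H r _ _.
rewrite /from_subspace p0 sub0r normrN => /(_ _ _)/(le_lt_trans (ler_norm _)); apply.
  by rewrite /ball_ /= sub0r normrN ger0_norm.
by rewrite /= in_itv /= r0.
Qed.

Lemma geom_small (R : realType) (q c : R) : 0 <= q < 1 -> 0 < c ->
  exists g : nat, q ^+ g < c.
Proof.
move=> /andP[q0 q1] c0.
have := @cvg_expr R q; rewrite ger0_norm // => /(_ q1).
move=> /cvgrPdist_lt /(_ _ c0) [N _ HN].
exists N; have := HN N (leqnn N).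
by rewrite sub0r normrN => /(le_lt_trans (ler_norm _)).
Qed.

Lemma hsum_decay (R : realType) d (C C' : cube R d) (k : 'I_d) : (0 < d)%N ->
  (forall i, hw C ord0 i <= hw C ord0 k) ->
  hsum C' = hsum C - hw C ord0 k / 2 ->
  hsum C' <= (1 - (2 * d%:R)^-1) * hsum C.
Proof.
move=> d0 Hk ->.
have dpos : 0 < d%:R :> R by rewrite ltr0n.
have Hs : hsum C <= d%:R * hw C ord0 k.
  apply: le_trans (_ : \sum_(i < d) hw C ord0 k <= _).
    by apply: ler_sum => i _; apply: Hk.
  by rewrite sumr_const card_ord mulr_natl.
have : hsum C / d%:R <= hw C ord0 k by rewrite ler_pdivrMr // mulrC.
rewrite mulrBl mul1r invfM -mulrA [_^-1 * hsum C]mulrC.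
set t := hsum C / d%:R => Ht; lra.
Qed.
Section B.
Variables (R : realType) (d : nat) (sel : cube R d -> 'I_d).



Lemma bis1_hw (C : cube R d) j : hw (bisect sel C).1 ord0 j =
  if j == sel C then hw C ord0 j / 2 else hw C ord0 j.
Proof. by rewrite /bisect /= mxE. Qed.
Lemma bis2_hw (C : cube R d) j : hw (bisect sel C).2 ord0 j =
  if j == sel C then hw C ord0 j / 2 else hw C ord0 j.
Proof. by rewrite /bisect /= mxE. Qed.

Lemma bis_valid (C : cube R d) : valid_cube C ->
  valid_cube (bisect sel C).1 /\ valid_cube (bisect sel C).2.
Proof.
move=> vC; split=> i; rewrite ?bis1_hw ?bis2_hw; case: eqP => _; have := vC i => //; lra.
Qed.

Lemma bis1_sub (C : cube R d) : cube_set (bisect sel C).1 `<=` cube_set C.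
Proof.
move=> x Hx i; have := Hx i; rewrite /bisect /= !mxE; case: eqP => // _.
rewrite !ler_norml => /andP[h1 h2]; apply/andP; split; lra.
Qed.
Lemma bis2_sub (C : cube R d) : cube_set (bisect sel C).2 `<=` cube_set C.
Proof.
move=> x Hx i; have := Hx i; rewrite /bisect /= !mxE; case: eqP => // _.
rewrite !ler_norml => /andP[h1 h2]; apply/andP; split; lra.
Qed.

Lemma bis_cover (C : cube R d) x : cube_set C x ->
  cube_set (bisect sel C).1 x \/ cube_set (bisect sel C).2 x.
Proof.
move=> Hx.
have [le|lt] := leP (x ord0 (sel C)) (Defs.center C ord0 (sel C)).
- left=> i; have := Hx i; rewrite /bisect /= !mxE; case: eqP => // ->.
  rewrite !ler_norml => /andP[h1 h2]; apply/andP; split; lra.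
- right=> i; have := Hx i; rewrite /bisect /= !mxE; case: eqP => // ->.
  rewrite !ler_norml => /andP[h1 h2]; apply/andP; split; lra.
Qed.

Lemma hsum_child (C C' : cube R d) : (forall j, hw C' ord0 j =
  if j == sel C then hw C ord0 j / 2 else hw C ord0 j) ->
  hsum C' = hsum C - hw C ord0 (sel C) / 2.
Proof.
move=> HC; rewrite /hsum (bigD1 (sel C)) //= [in RHS](bigD1 (sel C)) //=.
rewrite HC eqxx.
rewrite (eq_bigr (fun i => hw C ord0 i)); first lra.
by move=> i /negPf hi; rewrite HC hi.
Qed.

Lemma hsum_bis (C : cube R d) : hsum (bisect sel C).1 = hsum C - hw C ord0 (sel C) / 2 /\ hsum (bisect sel C).2 = hsum C - hw C ord0 (sel C) / 2.
Proof. by split; apply: hsum_child => j; rewrite ?bis1_hw ?bis2_hw. Qed.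

Lemma hsum_le_max (C : cube R d) : longest_edge_sel sel -> hsum C <= d%:R * hw C ord0 (sel C).
Proof.
move=> Hs; rewrite /hsum.
apply: le_trans (_ : \sum_(i < d) hw C ord0 (sel C) <= _).
  by apply: ler_sum => i _; apply: Hs.
by rewrite sumr_const card_ord mulr_natl.
Qed.

Lemma radius_le (C : cube R d) : valid_cube C -> cube_radius C <= hsum C.
Proof.
move=> vC; have h0 : forall i, 0 <= hw C ord0 i by move=> i; apply/ltW/vC.
have S0 : 0 <= hsum C by apply: sumr_ge0 => i _.
rewrite /cube_radius -(ger0_norm S0) -sqrtr_sqr ler_sqrt ?exprn_ge0 //.
rewrite expr2 /hsum mulr_sumr; apply: ler_sum => i _.
rewrite expr2 -/(hsum C) ler_wpM2r //.
rewrite /hsum (bigD1 i) //= lerDl; apply: sumr_ge0 => j _ //.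
Qed.
End B.

Lemma In_cat (T : Type) (e : T) (s1 s2 : seq T) :
  List.In e (s1 ++ s2) <-> List.In e s1 \/ List.In e s2.
Proof.
elim: s1 => [|a s IH] /=; first by split; [right|case].
rewrite IH; tauto.
Qed.

Section Main.
Variables (R : realType) (d : nat) (C0 : cube R d)
    (f : 'rV[R]_d -> R) (xr : cube R d -> 'rV[R]_d) (qlb : cube R d -> \bar R)
    (sel : cube R d -> 'I_d) (eps : R).
Hypotheses (vC0 : valid_cube C0) (Hxr : sampling_rule C0 xr)
  (Hq : qlb_rule f C0 qlb) (Hsel : longest_edge_sel sel).

Local Notation proc := (proc f xr qlb sel).
Local Notation upd := (upd f).
Definition entry := (cube R d * \bar R)%type.
Definition good (e : entry) := e.2 = qlb e.1 /\ subcube C0 e.1.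
Definition exmin (L : seq entry) :=
  exists2 e, List.In e L & (good e /\ fmin f e.1 = fmin f C0).
Definition allL (P : entry -> Prop) (L : seq entry) := forall e, List.In e L -> P e.

Lemma procE acc e : proc acc e =
  if (e.2 <= (acc.1.1)%:E)%E then
    (upd (upd acc.1 (xr (bisect sel e.1).1)) (xr (bisect sel e.1).2),
     acc.2 ++ [:: ((bisect sel e.1).1, qlb (bisect sel e.1).1);
                  ((bisect sel e.1).2, qlb (bisect sel e.1).2)])
  else acc.
Proof. by case: acc => p L; case: e => C q /=; case: (bisect sel C). Qed.

Lemma upd_le p x : (upd p x).1 <= p.1 /\ (upd p x).1 <= f x.
Proof.
rewrite /Defs.upd; case: ifP => /= [/ltW h|/negbT]; first by split.
by rewrite -leNgt.
Qed.

Lemma upd_inv p x : p.1 = f p.2 -> cube_set C0 p.2 -> cube_set C0 x ->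
  (upd p x).1 = f (upd p x).2 /\ cube_set C0 (upd p x).2.
Proof. by rewrite /Defs.upd; case: ifP. Qed.

Lemma child_sub C : subcube C0 C ->
  subcube C0 (bisect sel C).1 /\ subcube C0 (bisect sel C).2.
Proof.
move=> [vC sC]; have [v1 v2] := @bis_valid _ _ sel _ vC.
split; split => //; apply: subset_trans sC.
- exact: (@bis1_sub _ _ sel).
- exact: (@bis2_sub _ _ sel).
Qed.

Lemma proc_ub acc e : (proc acc e).1.1 <= acc.1.1.
Proof.
rewrite procE; case: ifP => // _ /=.
have [h1 _] := upd_le (upd acc.1 (xr (bisect sel e.1).1)) (xr (bisect sel e.1).2).
have [h2 _] := upd_le acc.1 (xr (bisect sel e.1).1).
exact: le_trans h1 h2.
Qed.

Lemma fold_ub L acc : (foldl proc acc L).1.1 <= acc.1.1.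
Proof.
elim: L acc => [|e L IH] acc /=; first by [].
exact: le_trans (IH _) (proc_ub _ _).
Qed.

Lemma fold_x L acc : allL good L -> acc.1.1 = f acc.1.2 -> cube_set C0 acc.1.2 ->
  (foldl proc acc L).1.1 = f (foldl proc acc L).1.2 /\
  cube_set C0 (foldl proc acc L).1.2.
Proof.
elim: L acc => [|e L IH] acc /= gL h1 h2; first by [].
apply: IH; first by move=> e' He'; apply: gL; right.
- rewrite procE; case: ifP => // _ /=.
  have [_ /child_sub [sc1 sc2]] : good e by apply: gL; left.
  have x1 := sc1.2 _ (Hxr _ sc1); have x2 := sc2.2 _ (Hxr _ sc2).
  have [u1 u2] := upd_inv _ _ h1 h2 x1.
  by have [] := upd_inv _ _ u1 u2 x2.
- rewrite procE; case: ifP => // _ /=.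
  have [_ /child_sub [sc1 sc2]] : good e by apply: gL; left.
  have x1 := sc1.2 _ (Hxr _ sc1); have x2 := sc2.2 _ (Hxr _ sc2).
  have [u1 u2] := upd_inv _ _ h1 h2 x1.
  by have [] := upd_inv _ _ u1 u2 x2.
Qed.



Lemma fmin_mono (A B : cube R d) : cube_set A `<=` cube_set B -> (fmin f B <= fmin f A)%E.
Proof.
move=> AB; apply: ereal_inf_le_tmp => _ [x Ax <-]; exists x => //; exact: AB.
Qed.

Lemma fmin_lb (A : cube R d) x : cube_set A x -> (fmin f A <= (f x)%:E)%E.
Proof. by move=> Ax; apply: ereal_inf_lbound; exists x. Qed.

Lemma child_fmin C : subcube C0 C -> fmin f C = fmin f C0 ->
  fmin f (bisect sel C).1 = fmin f C0 \/ fmin f (bisect sel C).2 = fmin f C0.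
Proof.
move=> sc eqC; have [[_ s1] [_ s2]] := child_sub _ sc.
have l1 := fmin_mono _ _ s1; have l2 := fmin_mono _ _ s2.
have [le12|lt21] := leP (fmin f (bisect sel C).1) (fmin f (bisect sel C).2).
- left; apply/eqP; rewrite eq_le l1 andbT -eqC.
  apply: le_ereal_inf_tmp => _ [x Cx <-].
  case: (@bis_cover _ _ sel _ _ Cx) => /fmin_lb // h; exact: le_trans le12 h.
- right; apply/eqP; rewrite eq_le l2 andbT -eqC.
  apply: le_ereal_inf_tmp => _ [x Cx <-].
  case: (@bis_cover _ _ sel _ _ Cx) => /fmin_lb // h; exact: le_trans (ltW lt21) h.
Qed.

Definition qq : R := 1 - (2 * d%:R)^-1.

Lemma qq_ge0 : (0 < d)%N -> 0 <= qq.
Proof.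
move=> d0; rewrite /qq subr_ge0 invf_le1 ?mulr_gt0 ?ltr0n //.
rewrite -natrM ler1n muln_gt0 /=; exact: d0.
Qed.

Lemma fold_good L acc B : (0 < d)%N -> allL good L -> allL (fun e => hsum e.1 <= B) L ->
  allL (fun e => good e /\ hsum e.1 <= qq * B) acc.2 ->
  allL (fun e => good e /\ hsum e.1 <= qq * B) (foldl proc acc L).2.
Proof.
move=> d0; elim: L acc => [|e L IH] acc //= gL bL ha.
apply: IH; [by move=> ? ?; apply: gL; right|by move=> ? ?; apply: bL; right|].
rewrite procE; case: ifP => // _ /= e' /In_cat [/ha //|].
have [_ ge] : good e by apply: gL; left.
have [sc1 sc2] := child_sub _ ge.
have be : hsum e.1 <= B by apply: bL; left.
have [h1 h2] := @hsum_bis _ _ sel e.1.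
have hk : forall i, hw e.1 ord0 i <= hw e.1 ord0 (sel e.1) by move=> i; apply: Hsel.
have q0 := qq_ge0 d0.
move=> [<-|[<-|[]]]; (split; first by split); rewrite /=.
- exact: le_trans (@hsum_decay _ _ _ _ _ d0 hk h1) (ler_wpM2l q0 be).
- exact: le_trans (@hsum_decay _ _ _ _ _ d0 hk h2) (ler_wpM2l q0 be).
Qed.

Lemma fold_le L acc : allL (fun e => acc.1.1 <= f (xr e.1)) acc.2 ->
  allL (fun e => (foldl proc acc L).1.1 <= f (xr e.1)) (foldl proc acc L).2.
Proof.
elim: L acc => [|e L IH] acc //= ha; apply: IH.
move=> e' He'; have := proc_ub acc e; move: He'.
rewrite procE; case: ifP => [_|_ /ha//] /= /In_cat [/ha h1 h2|]; first exact: le_trans h2 h1.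
have [u1 u2] := upd_le acc.1 (xr (bisect sel e.1).1).
have [w1 w2] := upd_le (upd acc.1 (xr (bisect sel e.1).1)) (xr (bisect sel e.1).2).
by move=> [<-|[<-|[]]] _ /=; [exact: le_trans w1 u2|exact: w2].
Qed.

Lemma fold_ex L acc : allL good L -> acc.1.1 = f acc.1.2 -> cube_set C0 acc.1.2 ->
  exmin L \/ exmin acc.2 -> exmin (foldl proc acc L).2.
Proof.
elim: L acc => [|e L IH] acc gL h1 h2 /=; first by case=> // -[].
move=> H.
have gL' : allL good L by move=> ? ?; apply: gL; right.
have ge1 : allL good [:: e] by move=> e0 [<-|[]]; apply: gL; left.
have [h1' h2'] := fold_x [:: e] acc ge1 h1 h2.
apply: IH => //.
case: H => [[e0 [<-|In0] [g0 m0]]|[e0 In0 g0]]; last first.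
- right; exists e0 => //; rewrite procE; case: ifP => // _ /=; apply/In_cat; by left.
- by left; exists e0.
- right; have [q0 sc] := g0.
  have nprune : (e.2 <= (acc.1.1)%:E)%E.
    rewrite q0 h1; apply: le_trans (Hq _ sc m0) _; rewrite m0; exact: fmin_lb _ _ h2.
  rewrite procE nprune /=.
  have [sc1 sc2] := child_sub _ sc.
  case: (child_fmin _ sc m0) => m.
  + by exists ((bisect sel e.1).1, qlb (bisect sel e.1).1) => //; apply/In_cat; right; left.
  + by exists ((bisect sel e.1).2, qlb (bisect sel e.1).2) => //; apply/In_cat; right; right; left.
Qed.


Local Notation bmin L := (\big[Order.min/+oo%E]_(x <- L) x.2)%E.

Lemma bigmin_le_In (L : seq entry) e : List.In e L -> (bmin L <= e.2)%E.
Proof.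
elim: L => [|a L IH] //= H; rewrite big_cons /Order.min.
case: H => [<-|/IH h].
  by case: ifP => [_|/negbT]; [exact: lexx|rewrite -leNgt].
by case: ifP => [lt|_]; [exact: le_trans (ltW lt) h|exact: h].
Qed.

Lemma le_bigmin (L : seq entry) y : (forall e, List.In e L -> (y <= e.2)%E) -> (y <= bmin L)%E.
Proof.
elim: L => [|a L IH] H; first by rewrite big_nil leey.
rewrite big_cons /Order.min; case: ifP => _; first by apply: H; left.
by apply: IH => e He; apply: H; right.
Qed.

Definition Inv1 (s : state R d) :=
  allL good (st_L s) /\ exmin (st_L s) /\ st_ub s = f (st_xbest s) /\
  cube_set C0 (st_xbest s) /\ st_lb s = bmin (st_L s).

Lemma Inv1_lb s : Inv1 s -> (st_lb s <= fmin f C0)%E.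
Proof.
move=> [_ [[e He [[q0 sc] m]] [_ [_ ->]]]].
apply: le_trans (bigmin_le_In _ _ He) _; rewrite q0 -m; exact: Hq.
Qed.

Lemma init_inv1 : Inv1 (Defs.init f xr qlb C0).
Proof.
have sc0 : subcube C0 C0 by split.
split; [|split; [|split; [|split]]] => //=.
- by move=> e [<-|[]].
- by exists (C0, qlb C0); [left|].
- exact: Hxr.
- rewrite big_cons big_nil /Order.min; case: ifP => // /negbT.
  by rewrite -leNgt leye_eq => /eqP.
Qed.

Lemma fold_good0 L acc : allL good L -> allL good acc.2 ->
  allL good (foldl proc acc L).2.
Proof.
elim: L acc => [|e L IH] acc //= gL ha.
apply: IH; first by move=> ? ?; apply: gL; right.
rewrite procE; case: ifP => // _ /= e' /In_cat [/ha //|].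
have [_ ge] : good e by apply: gL; left.
have [sc1 sc2] := child_sub _ ge.
by move=> [<-|[<-|[]]].
Qed.

Lemma next_inv1 s : Inv1 s -> Inv1 (Defs.next f xr qlb sel s).
Proof.
move=> [gL [ex [u [x _]]]].
rewrite /Defs.next.
have hx := fold_x (st_L s) ((st_ub s, st_xbest s), [::]) gL u x.
have hg := fold_good0 (st_L s) ((st_ub s, st_xbest s), [::]) gL (fun _ (H : List.In _ [::]) => match H with end).
have he := fold_ex (st_L s) ((st_ub s, st_xbest s), [::]) gL u x (or_introl ex).
move: hx hg he.
case: (foldl proc _ _) => p L' /= [h1 h2] hg he.
by split; [|split; [|split; [|split]]].
Qed.

Lemma run_inv1 g : Inv1 (Defs.run f xr qlb sel eps C0 g).
Proof.
elim: g => [|g IH]; first exact: init_inv1.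
rewrite /Defs.run iterS -/(Defs.run f xr qlb sel eps C0 g) /Defs.step.
by case: ifP => // _; apply: next_inv1.
Qed.

Definition Inv2 g (s : state R d) :=
  ~~ running eps s \/
  allL (fun e => good e /\ hsum e.1 <= qq ^+ g * hsum C0 /\ st_ub s <= f (xr e.1)) (st_L s).

Lemma run_inv2 g : (0 < d)%N -> Inv2 g (Defs.run f xr qlb sel eps C0 g).
Proof.
move=> d0; elim: g => [|g IH].
  rewrite /Inv2; right => e [<-|[]] /=.
  by split; [split => //; split|split; [rewrite expr0 mul1r|]].
rewrite /Defs.run iterS -/(Defs.run f xr qlb sel eps C0 g) /Defs.step.
case: ifP => [run|/negbT]; last by left.
case: IH; first by rewrite run.
set s := Defs.run _ _ _ _ _ _ g => H; right.
have gL : allL good (st_L s) by move=> e /H [].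
have bL : allL (fun e => hsum e.1 <= qq ^+ g * hsum C0) (st_L s) by move=> e /H [_ []].
have hg := fold_good (st_L s) ((st_ub s, st_xbest s), [::]) _ d0 gL bL
  (fun _ (H : List.In _ [::]) => match H with end).
have hl := fold_le (st_L s) ((st_ub s, st_xbest s), [::])
  (fun _ (H : List.In _ [::]) => match H with end).
rewrite /Defs.next; move: hg hl.
case: (foldl proc _ _) => p L' /= hg hl e He.
have [g1 g2] := hg e He; split => //; split; last exact: hl.
by rewrite exprS -mulrA.
Qed.


Lemma part2 : (0 < d)%N -> 0 < eps ->
  (exists psi : R -> R,
      {within `[0, +oo[%classic, continuous psi} /\ psi 0 = 0 /\
      (forall r, 0 <= r -> 0 <= psi r) /\
      (forall C, subcube C0 C -> ((f (xr C))%:E - qlb C <= (psi (cube_radius C))%:E)%E)) ->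
   exists g : nat,
     ~~ running eps (Defs.run f xr qlb sel eps C0 g) /\
     ((f (st_xbest (Defs.run f xr qlb sel eps C0 g)))%:E - fmin f C0 <= eps%:E)%E.
Proof.
move=> d0 e0 [psi [cpsi [p0 [pge Hpsi]]]].
have [del del0 Hdel] := @psi_delta _ _ _ cpsi p0 e0.
have S0 : 0 < hsum C0.
  rewrite /hsum (bigD1 (Ordinal d0)) //=.
  have a := vC0 (Ordinal d0).
  have b : 0 <= \sum_(i < d | i != Ordinal d0) hw C0 ord0 i.
    by apply: sumr_ge0 => i _; apply/ltW/vC0.
  lra.
have qq1 : 0 <= qq < 1.
  rewrite qq_ge0 //= /qq ltrBlDr ltrDl invr_gt0 mulr_gt0 ?ltr0n //.
have [g Hg] := @geom_small _ _ _ qq1 (divr_gt0 del0 S0).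
exists g; set s := Defs.run _ _ _ _ _ _ g.
have ni : ~~ running eps s.
  case: (run_inv2 g d0) => // H.
  rewrite /running -leNgt.
  have [_ [_ [_ [_ lbE]]]] := run_inv1 g; rewrite -/s in lbE; rewrite lbE.
  have : ((st_ub s - eps)%:E <= bmin (st_L s))%E.
    apply: le_bigmin => e /H [[q0 sc] [hb hu]].
    rewrite q0.
    have r0 : 0 <= cube_radius e.1 by apply: sqrtr_ge0.
    have rd : cube_radius e.1 < del.
      apply: le_lt_trans (@radius_le _ _ _ sc.1) _.
      apply: le_lt_trans hb _; by rewrite -ltr_pdivlMr.
    have := Hpsi e.1 sc; have := Hdel _ r0 rd.
    case: (qlb e.1) => [x| |] //=; last by rewrite leey.
    by rewrite lee_fin => h1 h2; rewrite lee_fin in h2 *; lra.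
  case: (bmin (st_L s)) => [l| |] //=; last by rewrite leNye.
  rewrite !lee_fin => h; lra.
split => //.
have Hlb := Inv1_lb _ (run_inv1 g); have [_ [_ [ue _]]] := run_inv1 g.
rewrite -/s in Hlb ue; rewrite -ue.
move: ni; rewrite /running -leNgt => ni; apply: le_trans ni.
exact: leeB.
Qed.

Lemma part1 g : (st_lb (Defs.run f xr qlb sel eps C0 g) <= fmin f C0)%E.
Proof. exact: Inv1_lb _ (run_inv1 g). Qed.

End Main.

Theorem theorem2 (R : realType) (d : nat) (C0 : cube R d)
    (f : 'rV[R]_d -> R) (xr : cube R d -> 'rV[R]_d) (qlb : cube R d -> \bar R)
    (sel : cube R d -> 'I_d) (eps : R) :
  (0 < d)%N ->
  valid_cube C0 ->
  {within cube_set C0, continuous f} ->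
  sampling_rule C0 xr ->
  qlb_rule f C0 qlb ->
  longest_edge_sel sel ->
  0 < eps ->
  (forall g : nat, (st_lb (run f xr qlb sel eps C0 g) <= fmin f C0)%E) /\
  ((exists psi : R -> R,
      {within `[0, +oo[%classic, continuous psi} /\ psi 0 = 0 /\
      (forall r, 0 <= r -> 0 <= psi r) /\
      (forall C, subcube C0 C -> ((f (xr C))%:E - qlb C <= (psi (cube_radius C))%:E)%E)) ->
   exists g : nat,
     ~~ running eps (run f xr qlb sel eps C0 g) /\
     ((f (st_xbest (run f xr qlb sel eps C0 g)))%:E - fmin f C0 <= eps%:E)%E).
Proof.
move=> d0 vC0 _ Hxr Hq Hsel e0; split.
- exact: part1.
- exact: part2.
Qed.
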